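(* Let $d\ge 2$, $\alpha\in[0,1]$, and let $\rho_W$ be the Werner state on $\mathbb C^d\otimes\mathbb C^d$, \[ \rho_W=\alpha\binom{d+1}{2}^{-1}\Pi_+ + (1-\alpha)\binom{d}{2}^{-1}\Pi_-,\qquad \Pi_\pm=\tfrac12(\mathbb I\pm F), \] where $F=\sum_{i,j=1}^d|i\rangle\langle j|\otimes|j\rangle\langle i|$ is the swap operator. Let $p_n=\mathrm{Tr}[(\rho_W^{T_A})^n]$. Then $p_3<p_2^2$ if and only if $\alpha<1/2$, and this holds if and only if $\rho_W^{T_A}$ has a negative eigenvalue. (Consequently, since $\rho_W$ is separable for $\alpha\ge1/2$, the condition $p_3<p_2^2$ is necessary and sufficient for $\rho_W$ to be entangled.)
   Context: The partial transpose on the first factor $A$ is defined in the computational product basis by $(|k_A,k_B\rangle\langle l_A,l_B|)^{T_A}=|l_A,k_B\rangle\langle k_A,l_B|$. *)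

(* Defs.v *)
(* C^d (x) C^d is identified with C^(d*d)
   via the row-major index (i,j) |-> i*d + j  (mxtens_index of real_closed). *)
From HB Require Import structures.
From mathcomp Require Import all_boot all_order all_algebra.
From mathcomp Require Import complex mxtens.
Set Implicit Arguments. Unset Strict Implicit. Unset Printing Implicit Defensive.
Import Order.TTheory GRing.Theory Num.Theory.
Local Open Scope ring_scope.

Section Werner.
Variables (R : rcfType) (d : nat).
Local Notation C := R[i].

Definition kidx (kA kB : 'I_d) : 'I_(d * d) := mxtens_index (kA, kB).

Definition swapF : 'M[C]_(d * d) :=
  \sum_(i < d) \sum_(j < d) (delta_mx i j *t delta_mx j i).

Definition PiPlus : 'M[C]_(d * d) := 2^-1 *: (1%:M + swapF).
Definition PiMinus : 'M[C]_(d * d) := 2^-1 *: (1%:M - swapF).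

Definition werner (alpha : R) : 'M[C]_(d * d) :=
  ((alpha%:C)%C / ('C(d.+1, 2))%:R) *: PiPlus
  + (((1 - alpha)%:C)%C / ('C(d, 2))%:R) *: PiMinus.

Definition ptA (M : 'M[C]_(d * d)) : 'M[C]_(d * d) :=
  \sum_(kA < d) \sum_(kB < d) \sum_(lA < d) \sum_(lB < d)
     M (kidx kA kB) (kidx lA lB) *: delta_mx (kidx lA kB) (kidx kA lB).

Definition pmoment (M : 'M[C]_(d * d)) (n : nat) : C := \tr (ptA M ^+ n).

End Werner.

(* Main.v *)
Require Import Defs.
From HB Require Import structures.
From mathcomp Require Import all_boot all_order all_algebra.
From mathcomp Require Import complex mxtens.
From mathcomp Require Import ring lra zify.
Set Implicit Arguments. Unset Strict Implicit. Unset Printing Implicit Defensive.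
Import Order.TTheory GRing.Theory Num.Theory.
Local Open Scope ring_scope.

Section S.
Variables (R : rcfType) (d : nat).
Local Notation C := R[i].
Local Notation kidx := (@kidx d).

Lemma kidx_eq (a b c e : 'I_d) : (kidx a b == kidx c e) = (a == c) && (b == e).
Proof. by rewrite /kidx (can_eq (@mxtens_indexK d d)) xpair_eqE. Qed.

Lemma sum_delta (F : 'I_d -> C) j : \sum_i ((i == j)%:R * F i) = F j.
Proof.
rewrite (bigD1 j) //= eqxx mul1r big1 ?addr0 // => i /negbTE ->; by rewrite mul0r.
Qed.

Lemma ptA_entry (M : 'M[C]_(d * d)) x y z w :
  ptA M (kidx x y) (kidx z w) = M (kidx z y) (kidx x w).
Proof.
rewrite /ptA summxE.
transitivity (\sum_(kA < d) (kA == z)%:R * \sum_(kB < d) (kB == y)%:R * 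
   \sum_(lA < d) (lA == x)%:R * \sum_(lB < d) (lB == w)%:R * M (kidx kA kB) (kidx lA lB)).
  apply: eq_bigr => kA _; rewrite summxE mulr_sumr; apply: eq_bigr => kB _.
  rewrite summxE mulrA mulr_sumr; apply: eq_bigr => lA _.
  rewrite summxE mulrA mulr_sumr; apply: eq_bigr => lB _.
  rewrite !mxE !kidx_eq.
  rewrite [(lA == x)]eq_sym [(kB == y)]eq_sym [(kA == z)]eq_sym [(lB == w)]eq_sym.
  by case: (x == lA); case: (y == kB); case: (z == kA); case: (w == lB); rewrite /= ?mulr1 ?mulr0 ?mul1r ?mul0r.
by rewrite !sum_delta.
Qed.

Lemma swap_entry x y z w :
  swapF R d (kidx x y) (kidx z w) = ((x == w) && (y == z))%:R.
Proof.
rewrite /swapF summxE.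
transitivity (\sum_(i < d) (i == x)%:R * \sum_(j < d) (j == y)%:R *
   ((z == j) && (w == i))%:R :> C).
  apply: eq_bigr => i _; rewrite summxE mulr_sumr; apply: eq_bigr => j _.
  rewrite tensmxE !mxE [(i == x)]eq_sym [(j == y)]eq_sym.
  by case: (x == i); case: (y == j); case: (z == j); case: (w == i);
    rewrite /= ?mulr1 ?mulr0 ?mul1r ?mul0r.
rewrite sum_delta (@sum_delta (fun j => ((z == j) && (w == x))%:R)).
by rewrite eq_sym [w == x]eq_sym andbC.
Qed.

Definition eidx (r : 'I_(d * d)) : bool :=
  (mxtens_unindex r).1 == (mxtens_unindex r).2.

Definition PP : 'M[C]_(d * d) := \matrix_(r, s) (eidx r && eidx s)%:R.

Lemma eidx_kidx x y : eidx (kidx x y) = (x == y).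
Proof. by rewrite /eidx /kidx mxtens_indexK. Qed.

Lemma werner_ptA (alpha : R) :
  let c1 := (alpha%:C)%C / ('C(d.+1, 2))%:R in
  let c2 := ((1 - alpha)%:C)%C / ('C(d, 2))%:R in
  ptA (werner d alpha) = ((c1 + c2) / 2) *: 1%:M + ((c1 - c2) / 2) *: PP.
Proof.
move=> c1 c2; apply/matrixP => r s.
case: (@mxtens_indexP d d r) => x y; case: (@mxtens_indexP d d s) => z w.
rewrite -/(kidx x y) -/(kidx z w) ptA_entry.
rewrite /werner /PiPlus /PiMinus !mxE swap_entry !kidx_eq !eidx_kidx -/c1 -/c2.
rewrite [z == x]eq_sym [z == w]eq_sym [y == x]eq_sym [andb (x == y) _]andbC.
rewrite -/c1 -/c2; ring.
Qed.

Lemma sum_kidx (F : 'I_(d * d) -> C) :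
  \sum_r F r = \sum_(i < d) \sum_(j < d) F (kidx i j).
Proof.
rewrite pair_big /=.
rewrite (reindex (@mxtens_index d d)) /=; last first.
  by apply: onW_bij; exists (@mxtens_unindex d d);
    [exact: mxtens_indexK | exact: mxtens_unindexK].
by apply: eq_bigr => -[i j].
Qed.

Lemma sum_eidx : \sum_r (eidx r)%:R = d%:R :> C.
Proof.
rewrite sum_kidx.
under eq_bigr => i _ do (under eq_bigr => j _ do rewrite eidx_kidx eq_sym -[(_)%:R]mulr1;
   rewrite (@sum_delta (fun _ => 1))).
by rewrite sumr_const card_ord.
Qed.

Lemma PP2 : PP * PP = d%:R *: PP.
Proof.
apply/matrixP => r s; rewrite -mulmxE !mxE.
under eq_bigr => t _ do rewrite !mxE.
transitivity (\sum_t (eidx r && eidx s)%:R * (eidx t)%:R : C).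
  by apply: eq_bigr => t _; case: (eidx r); case: (eidx s); case: (eidx t);
    rewrite /= ?mulr1 ?mulr0 ?mul1r ?mul0r.
by rewrite -mulr_sumr sum_eidx mulrC.
Qed.

Lemma trPP : \tr PP = d%:R.
Proof.
rewrite /mxtrace -sum_eidx; apply: eq_bigr => r _; by rewrite mxE andbb.
Qed.

Definition QQ : 'M[C]_(d * d) := (d%:R)^-1 *: PP.

Hypothesis d_gt0 : (0 < d)%N.

Lemma dC_neq0 : (d%:R : C) != 0.
Proof. by rewrite pnatr_eq0 -lt0n. Qed.

Lemma QQ2 : QQ *m QQ = QQ.
Proof.
rewrite /QQ -scalemxAl -scalemxAr mulmxE PP2 !scalerA -mulrA mulVf ?dC_neq0 //.
by rewrite mulr1.
Qed.

Lemma trQQ : \tr QQ = 1.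
Proof. by rewrite /QQ mxtraceZ trPP mulVf ?dC_neq0. Qed.

Lemma pow_decompG (Q : 'M[C]_(d * d)) (A X : C) n : Q *m Q = Q ->
  (A *: (1%:M - Q) + X *: Q) ^+ n = A ^+ n *: (1%:M - Q) + X ^+ n *: Q.
Proof.
move=> QQ2.
have h2 : (1%:M - Q) *m Q = 0 by rewrite mulmxBl mul1mx QQ2 subrr.
have h3 : Q *m (1%:M - Q) = 0 by rewrite mulmxBr mulmx1 QQ2 subrr.
have h1 : (1%:M - Q) *m (1%:M - Q) = 1%:M - Q.
  by rewrite mulmxBl mul1mx h3 subr0.
elim: n => [|n IH]; first by rewrite !expr0 !scale1r subrK.
rewrite exprSr IH -mulmxE mulmxDl !mulmxDr.
rewrite -!scalemxAl -!scalemxAr h1 h2 h3 QQ2 !scalerA !scaler0 addr0 add0r.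
by rewrite !exprSr.
Qed.

Lemma pow_decomp (A X : C) n :
  (A *: (1%:M - QQ) + X *: QQ) ^+ n = A ^+ n *: (1%:M - QQ) + X ^+ n *: QQ.
Proof. exact: pow_decompG QQ2. Qed.

Lemma tr1Q : \tr (1%:M - QQ) = (d * d)%:R - 1.
Proof.
apply: (addIr (\tr QQ)); rewrite -mxtraceD !subrK trQQ subrK.
by rewrite mxtrace_scalar.
Qed.

Lemma tr_decomp (A X : C) n :
  \tr ((A *: (1%:M - QQ) + X *: QQ) ^+ n) = A ^+ n * ((d * d)%:R - 1) + X ^+ n.
Proof.
by rewrite pow_decomp mxtraceD !mxtraceZ tr1Q trPP mulVf ?dC_neq0 // mulr1.
Qed.

Lemma M_decomp (A B : C) :
  A *: 1%:M + B *: PP = A *: (1%:M - QQ) + (A + B * d%:R) *: QQ.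
Proof.
rewrite /QQ scalerBr scalerDl !scalerA -mulrA mulfV ?dC_neq0 // mulr1.
by rewrite addrA subrK.
Qed.
End S.

Lemma bin2_nat n : ('C(n, 2) * 2 = n * n.-1)%N.
Proof.
elim: n => [//|n IH]; rewrite binS bin1 mulnDl IH /=; case: n {IH} => [//|n] /=; lia.
Qed.

Section Real.
Variables (R : rcfType) (d : nat) (alpha : R).
Hypothesis d2 : (2 <= d)%N.
Hypothesis a01 : 0 <= alpha <= 1.

Lemma bin2R n : (1 <= n)%N -> ('C(n, 2))%:R = (n%:R * (n%:R - 1)) / 2 :> R.
Proof.
move=> n1; apply: (mulIf (x := 2)); first by rewrite pnatr_eq0.
rewrite mulfVK ?pnatr_eq0 // -natrM bin2_nat -(prednK n1) /= natrM.
by rewrite -addn1 natrD addrK.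
Qed.

Definition DD : R := d%:R.
Definition c1r : R := alpha / ('C(d.+1, 2))%:R.
Definition c2r : R := (1 - alpha) / ('C(d, 2))%:R.
Definition ar : R := (c1r + c2r) / 2.
Definition br : R := (c1r - c2r) / 2.
Definition xr : R := ar + br * DD.

Lemma DD2 : 2 <= DD.
Proof. by rewrite /DD ler_nat. Qed.

Lemma c1rE : c1r = 2 * alpha / (DD * (DD + 1)).
Proof.
rewrite /c1r bin2R // /DD -addn1 natrD addrK.
have h1 : (d%:R : R) != 0 by rewrite pnatr_eq0; case: d d2.
have h2 : (d%:R + 1 : R) != 0 by rewrite natr1 pnatr_eq0.
by field; rewrite h1 h2.
Qed.

Lemma c2rE : c2r = 2 * (1 - alpha) / (DD * (DD - 1)).
Proof.
rewrite /c2r bin2R ?(leq_trans _ d2) // /DD.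
have h1 : (d%:R : R) != 0 by rewrite pnatr_eq0; case: d d2.
have h2 : (d%:R - 1 : R) != 0.
  by rewrite subr_eq0 (eqr_nat R d 1); case: d d2 => [|[]].
by field; rewrite h1 h2.
Qed.

Lemma xrE : xr = (2 * alpha - 1) / DD.
Proof.
rewrite /xr /ar /br c1rE c2rE.
have := DD2 => h.
have h1 : DD != 0 by apply/negP => /eqP h0; rewrite h0 in h; lra.
have h2 : DD + 1 != 0 by apply/negP => /eqP h0; lra.
have h3 : DD - 1 != 0 by apply/negP => /eqP h0; lra.
by field; rewrite h1 h2 h3.
Qed.

Lemma trace1 : ar * (DD * DD - 1) + xr = 1.
Proof.
rewrite xrE /ar c1rE c2rE.
have := DD2 => h.
have h1 : DD != 0 by apply/negP => /eqP h0; rewrite h0 in h; lra.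
have h2 : DD + 1 != 0 by apply/negP => /eqP h0; lra.
have h3 : DD - 1 != 0 by apply/negP => /eqP h0; lra.
by field; rewrite h1 h2 h3.
Qed.

Lemma ar_ge0 : 0 <= ar.
Proof.
rewrite /ar c1rE c2rE; have := DD2 => h; case/andP: a01 => h0 h1'.
apply: divr_ge0; last by [].
apply: addr_ge0; apply: divr_ge0; try apply: mulr_ge0; try nra.
Qed.

End Real.

Section Final.
Variables (R : rcfType) (d : nat) (alpha : R).
Hypothesis d2 : (2 <= d)%N.
Hypothesis a01 : 0 <= alpha <= 1.
Local Notation C := R[i].
Local Notation a := (ar d alpha).
Local Notation x := (xr d alpha).
Local Notation Q := (QQ R d).

Lemma d_gt0 : (0 < d)%N. Proof. exact: leq_trans d2. Qed.

Lemma natC n : (n%:R : C) = ((n%:R : R)%:C)%C.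
Proof. by rewrite rmorph_nat. Qed.

Lemma ptA_W : ptA (werner d alpha) = (a%:C)%C *: (1%:M - Q) + (x%:C)%C *: Q.
Proof.
rewrite werner_ptA /= (M_decomp d_gt0).
have ha : (alpha%:C%C / 'C(d.+1, 2)%:R + (1 - alpha)%:C%C / 'C(d, 2)%:R) / 2
   = (a%:C)%C.
  by rewrite /ar /c1r /c2r !natC !(rmorphM, rmorphD, fmorphV).
have hb : (alpha%:C%C / 'C(d.+1, 2)%:R - (1 - alpha)%:C%C / 'C(d, 2)%:R) / 2
   = ((br d alpha)%:C)%C.
  by rewrite /br /c1r /c2r !natC !(rmorphM, rmorphB, fmorphV).
rewrite ha hb; congr (_ + _ *: _).
by rewrite /xr /DD !natC !(rmorphM, rmorphD).
Qed.

Lemma pmomentE n :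
  pmoment (werner d alpha) n = (a ^+ n * (DD R d * DD R d - 1) + x ^+ n)%:C%C.
Proof.
rewrite /pmoment ptA_W (tr_decomp d_gt0) /DD natrM.
move: (ar d alpha) (xr d alpha) => a0 x0.
rewrite [RHS]rmorphD !rmorphM rmorphB rmorph1 !rmorphXn.
congr (_ * (_ - 1) + _); by rewrite -!natrM natC.
Qed.


Lemma key (m a0 x0 : R) : 0 < m -> 0 <= a0 -> a0 * m + x0 = 1 ->
  (a0 ^+ 3 * m + x0 ^+ 3 < (a0 ^+ 2 * m + x0 ^+ 2) ^+ 2) <-> (x0 < 0).
Proof.
move=> hm ha t1.
have ident : (a0 ^+ 2 * m + x0 ^+ 2) ^+ 2 - (a0 ^+ 3 * m + x0 ^+ 3)
    = (m * a0) * (- x0) * (a0 - x0) ^+ 2.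
  rewrite -[X in _ - X = _]mulr1 -t1; ring.
split => h.
  rewrite ltNge; apply/negP => hx.
  have : 0 <= (m * a0) * x0 * (a0 - x0) ^+ 2.
    by apply: mulr_ge0; [apply: mulr_ge0; [apply: mulr_ge0; lra|] |apply: sqr_ge0].
  rewrite -subr_gt0 ident in h; nra.
have hma : 0 < m * a0 by lra.
have hsq : 0 < (a0 - x0) ^+ 2 by rewrite exprn_gt0 // subr_gt0; lra.
rewrite -subr_gt0 ident; apply: mulr_gt0 => //; apply: mulr_gt0 => //; lra.
Qed.

Lemma mul_decomp (Q0 : 'M[C]_(d * d)) (u : 'rV[C]_(d * d)) A X :
  u *m (A *: (1%:M - Q0) + X *: Q0) = A *: (u - u *m Q0) + X *: (u *m Q0).
Proof. by rewrite mulmxDr -!scalemxAr mulmxBr mulmx1. Qed.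

Lemma mul_decompQ (Q0 : 'M[C]_(d * d)) (u : 'rV[C]_(d * d)) A X :
  Q0 *m Q0 = Q0 ->
  u *m (A *: (1%:M - Q0) + X *: Q0) *m Q0 = X *: (u *m Q0).
Proof.
move=> h; rewrite mul_decomp mulmxDl -!scalemxAl mulmxBl -mulmxA h subrr.
by rewrite scaler0 add0r.
Qed.

Definition vrow : 'rV[C]_(d * d) := \row_r (eidx r)%:R.

Lemma vPP : vrow *m PP R d = d%:R *: vrow.
Proof.
apply/matrixP => i s; rewrite !mxE.
under eq_bigr => t _ do rewrite !mxE.
transitivity (\sum_(t : 'I_(d * d)) (eidx s)%:R * (eidx t)%:R : C).
  by apply: eq_bigr => t _; case: (eidx s); case: (eidx t);
    rewrite /= ?mulr1 ?mulr0 ?mul1r ?mul0r.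
by rewrite -mulr_sumr sum_eidx mulrC.
Qed.

Lemma vQ : vrow *m Q = vrow.
Proof.
rewrite /QQ -scalemxAr vPP scalerA mulVf ?scale1r //.
exact: (dC_neq0 R d_gt0).
Qed.

Lemma v_neq0 : vrow != 0.
Proof.
apply/negP => /eqP h.
have := congr1 (fun M : 'rV[C]_(d * d) => M 0 (kidx (Ordinal d_gt0) (Ordinal d_gt0))) h.
by rewrite /= !mxE eidx_kidx eqxx /= => /eqP; rewrite oner_eq0.
Qed.

Lemma eig_iff : (x < 0) <->
  exists lambda : C, eigenvalue (ptA (werner d alpha)) lambda /\ lambda < 0.
Proof.
split => [hx | [lam [hev hlam]]].
  exists (x%:C)%C; split; last by move: hx; rewrite -(ltcR x 0).
  apply/eigenvalueP; exists vrow; last exact: v_neq0.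
  by rewrite ptA_W mul_decomp vQ subrr scaler0 add0r.
rewrite ltNge; apply/negP => hx.
have hx' : (0 : C) <= (x%:C)%C by move: hx; rewrite -(lecR 0 x).
have ha' : (0 : C) <= (a%:C)%C by move: (ar_ge0 d2 a01); rewrite -(lecR 0 a).
case/eigenvalueP: hev => v hv vn0.
rewrite ptA_W in hv.
have hw : (x%:C - lam)%C *: (v *m Q) = 0.
  have := congr1 (fun M => M *m Q) hv.
  rewrite /= (mul_decompQ _ _ _ (QQ2 R d_gt0)) -scalemxAl.
  by move=> h; rewrite scalerBl h subrr.
rewrite mul_decomp in hv.
move/eqP: hw; rewrite scalemx_eq0 subr_eq0 gt_eqF /=; last exact: lt_le_trans hlam hx'.
move/eqP => hw; rewrite hw subr0 scaler0 addr0 in hv.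
have : (a%:C - lam)%C *: v == 0 by apply/eqP; rewrite scalerBl hv subrr.
rewrite scalemx_eq0 subr_eq0 gt_eqF /=; last exact: lt_le_trans hlam ha'.
by move/eqP => v0; rewrite v0 eqxx in vn0.
Qed.
End Final.


Theorem mainTheorem4 (R : rcfType) (d : nat) (alpha : R) :
  (2 <= d)%N -> 0 <= alpha <= 1 ->
  (pmoment (werner d alpha) 3 < pmoment (werner d alpha) 2 ^+ 2
     <-> alpha < 2^-1) /\
  (alpha < 2^-1 <->
     exists lambda : R[i], eigenvalue (ptA (werner d alpha)) lambda /\ lambda < 0).
Proof.
move=> d2 a01.
have hD : 0 < DD R d by have := DD2 R d2; lra.
have hxa : (xr d alpha < 0) <-> (alpha < 2^-1).
  rewrite (xrE alpha d2) pmulr_llt0 ?invr_gt0 //; split => h; lra.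
split.
  rewrite !(pmomentE alpha d2) -rmorphXn ltcR -hxa; apply: key.
  - have := DD2 R d2; nra.
  - exact: ar_ge0.
  - exact: trace1 alpha d2.
rewrite -hxa; exact: eig_iff d2 a01.
Qed.
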